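(* Let $\mathsf{X}$ be a metric space and $\preceq$ a closed, down-compact partial order on it. Then for all sequences $(x^-_n)$, $(x_n)$, $(x^+_n)$ in $\mathsf{X}$ and $x_\infty\in\mathsf{X}$: if $x^-_n\preceq x_n\preceq x^+_n$ for all $n$, $x^-_n\to x_\infty$ and $x^+_n\to x_\infty$, then $x_n\to x_\infty$.
   Context: A partial order $\preceq$ on a metric space $\mathsf{X}$ is closed if its graph $\{(x,y):x\preceq y\}$ is closed in $\mathsf{X}\times\mathsf{X}$, and down-compact if for every compact $K^+\subset\mathsf{X}$ the set $\{x\in\mathsf{X}:\exists x^+\in K^+,\ x\preceq x^+\}$ is compact. *)

(* Defs.v *)
From HB Require Import structures.
From mathcomp Require Import all_boot all_order all_algebra.
From mathcomp Require Import all_classical all_reals all_analysis.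
Set Implicit Arguments. Unset Strict Implicit. Unset Printing Implicit Defensive.
Import Order.TTheory GRing.Theory Num.Theory.
Local Open Scope classical_set_scope.

Definition is_partial_order (T : Type) (le : T -> T -> Prop) : Prop :=
  [/\ (forall x, le x x),
      (forall x y, le x y -> le y x -> x = y) &
      (forall x y z, le x y -> le y z -> le x z)].

Definition order_closed (T : topologicalType) (le : T -> T -> Prop) : Prop :=
  closed [set p : T * T | le p.1 p.2].

Definition down_compact (T : topologicalType) (le : T -> T -> Prop) : Prop :=
  forall K : set T, compact K -> compact [set x | exists2 y, K y & le x y].

(* Main.v *)
Require Import Defs.
From HB Require Import structures.
From mathcomp Require Import all_boot all_order all_algebra.
From mathcomp Require Import all_classical all_reals all_analysis.
Import Order.TTheory GRing.Theory Num.Theory.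
Local Open Scope classical_set_scope.

Lemma seq_lim_compact (R : realType) (X : pseudoMetricType R) (xp : nat -> X)
  (xinf : X) : xp @ \oo --> xinf ->
  compact [set y | y = xinf \/ exists n, y = xp n].
Proof.
move=> hxp F PF FK.
case: (pselect (cluster F xinf)) => [c|nc].
  by exists xinf; split => //; left.
have [A [B [FA [NB AB]]]] : exists A B, F A /\ nbhs xinf B /\ ~ (A `&` B !=set0).
  apply: contrapT => H; apply: nc => A B FA NB; apply: contrapT => h.
  by apply: H; exists A, B.
have := hxp B NB; case=> N _ HN.
set S := xp @` `I_N.
have cS : compact S by apply: finite_compact; apply: finite_image; exact: finite_II.
have FS : F S.
  apply: (filterS _ (filterI FA FK)) => y [Ay]; case=> [yE|[n yE]]; subst y.
    by exfalso; apply: AB; exists xinf; split; [exact: Ay | exact: (nbhs_singleton NB)].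
  case: (ltnP n N) => hn; first by exists n.
  by exfalso; apply: AB; exists (xp n); split => //; exact: HN.
have [y [[n _ <-] cy]] := cS F PF FS.
by exists (xp n); split => //; right; exists n.
Qed.

Theorem lemma3p14 (R : realType) (X : pseudoMetricType R)
  (hX : hausdorff_space X) (le : X -> X -> Prop)
  (hpo : is_partial_order le) (hcl : order_closed le) (hdc : down_compact le)
  (xm x xp : nat -> X) (xinf : X) :
  (forall n, le (xm n) (x n) /\ le (x n) (xp n)) ->
  xm @ \oo --> xinf -> xp @ \oo --> xinf ->
  x @ \oo --> xinf.
Proof.
move=> hle hxm hxp U NU; apply: contrapT => nU.
have freq : forall N, exists n, (N <= n)%N /\ ~ U (x n).
  move=> N; apply: contrapT => H; apply: nU; exists N => // n /= Nn.
  by apply: contrapT => h; apply: H; exists n.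
pose G := fun P : set X => exists N, forall n, (N <= n)%N -> ~ U (x n) -> P (x n).
have PG : ProperFilter G.
  split.
    by case=> N HN; have [n [Nn Un]] := freq N; exact: (HN n Nn Un).
  split.
  - by exists 0%N.
  - move=> P Q [N1 H1] [N2 H2]; exists (maxn N1 N2) => n.
    by rewrite geq_max => /andP[h1 h2] Un; split; [exact: H1|exact: H2].
  - by move=> P Q PQ [N H]; exists N => n Nn Un; apply: PQ; exact: H.
set K := [set y | y = xinf \/ exists n, y = xp n].
have cK : compact K by exact: seq_lim_compact.
have GD : G [set z | exists2 y, K y & le z y].
  by exists 0%N => n _ _; exists (xp n); [right; exists n | exact: (hle n).2].
have [y [_ cy]] := hdc K cK G PG GD.
case: hpo => _ anti _.
have le1 : le xinf y.
  apply: (hcl (xinf, y)) => B /=; rewrite nbhsE /=.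
  case=> O [oO Oin] OB.
  move: oO => /(_ _ Oin); case=> -[P Q] /= [NP NQ] PQO.
  have := hxm P NP; case=> N _ HN.
  have GA : G [set z | exists2 n, (N <= n)%N & z = x n].
    by exists N => n Nn _; exists n.
  have [z [[n Nn ->] Qz]] := cy _ _ GA NQ.
  exists (xm n, x n); split; first exact: (hle n).1.
  by apply: OB; apply: PQO; split => //; exact: HN.
have le2 : le y xinf.
  apply: (hcl (y, xinf)) => B /=; rewrite nbhsE /=.
  case=> O [oO Oin] OB.
  move: oO => /(_ _ Oin); case=> -[P Q] /= [NP NQ] PQO.
  have := hxp Q NQ; case=> N _ HN.
  have GA : G [set z | exists2 n, (N <= n)%N & z = x n].
    by exists N => n Nn _; exists n.
  have [z [[n Nn ->] Pz]] := cy _ _ GA NP.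
  exists (x n, xp n); split; first exact: (hle n).2.
  by apply: OB; apply: PQO; split => //; exact: HN.
have yE := anti _ _ le1 le2; subst y.
have GU : G (~` U) by exists 0%N.
by have [z [nz Uz]] := cy _ _ GU NU.
Qed.
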